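(* Let $[\mu]\in\mathbb PV_n$ be a critical point of $F_n$ with $\mathrm M_\mu=c_\mu I+D_\mu$, $c_\mu\in\mathbb R$, $D_\mu\in\mathrm{Der}(\mu)$. Then there is a constant $c>0$ such that all eigenvalues of $cD_\mu$ are integers with no common divisor greater than $1$; i.e. the distinct eigenvalues of $cD_\mu$ are integers $k_1<k_2<\dots<k_r$ (with multiplicities $d_1,\dots,d_r\in\mathbb N$) that are coprime as a set.
   Context: $V_n$ is the space of bilinear maps $\mu:\mathbb C^n\times\mathbb C^n\to\mathbb C^n$ with the standard Hermitian structures. $L^\mu_XY=\mu(X,Y)$, $R^\mu_XY=\mu(Y,X)$, $\mathrm M_\mu=2\sum_i L^\mu_{X_i}(L^\mu_{X_i})^*-2\sum_i (L^\mu_{X_i})^*L^\mu_{X_i}-2\sum_i (R^\mu_{X_i})^*R^\mu_{X_i}$ for an orthonormal basis $\{X_i\}$ (a Hermitian matrix), $F_n([\mu])=\operatorname{tr}\mathrm M_\mu^2/\|\mu\|^4$. $[\mu]$ is a critical point of $F_n$ iff $\mathrm M_\mu=c_\mu I+D_\mu$ with $c_\mu\in\mathbb R$, $D_\mu\in\mathrm{Der}(\mu)$ (derivation algebra). (When $D_\mu=0$ the conclusion is read as: the only eigenvalue is $0$, $r=1$, $d_1=n$.) *)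

(* Defs.v *)
From mathcomp Require Import all_boot all_order all_algebra.
From mathcomp Require Export reals.
From mathcomp.real_closed Require Export complex.
Set Implicit Arguments. Unset Strict Implicit. Unset Printing Implicit Defensive.
Import GRing.Theory Num.Theory.
Local Open Scope ring_scope.

(* An element of V_n: a bilinear map mu : C^n x C^n -> C^n, encoded by its
   values on the standard (orthonormal) basis: mu i j = mu(e_i, e_j),
   a column vector of C^n. *)
Definition bilin (R : realType) (n : nat) := 'I_n -> 'I_n -> 'cV[R[i]]_n.

Definition evec (R : realType) (n : nat) (i : 'I_n) : 'cV[R[i]]_n :=
  delta_mx i 0.
Arguments evec {R n} i.

Definition bapp (R : realType) (n : nat) (mu : bilin R n) (x y : 'cV[R[i]]_n)
  : 'cV[R[i]]_n :=
  \sum_(i < n) \sum_(j < n) (x i 0 * y j 0) *: mu i j.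

Definition Lmx (R : realType) (n : nat) (mu : bilin R n) (x : 'cV[R[i]]_n)
  : 'M[R[i]]_n := \matrix_(k, j) (bapp mu x (evec j)) k 0.
Definition Rmx (R : realType) (n : nat) (mu : bilin R n) (x : 'cV[R[i]]_n)
  : 'M[R[i]]_n := \matrix_(k, j) (bapp mu (evec j) x) k 0.

Definition adjmx (R : realType) (n : nat) (A : 'M[R[i]]_n) : 'M[R[i]]_n :=
  map_mx (fun z => z^*) A^T.

Definition Mmu (R : realType) (n : nat) (mu : bilin R n) : 'M[R[i]]_n :=
  (\sum_(i < n) Lmx mu (evec i) *m adjmx (Lmx mu (evec i))) *+ 2
  - (\sum_(i < n) adjmx (Lmx mu (evec i)) *m Lmx mu (evec i)) *+ 2
  - (\sum_(i < n) adjmx (Rmx mu (evec i)) *m Rmx mu (evec i)) *+ 2.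

Definition is_derivation (R : realType) (n : nat) (mu : bilin R n)
  (D : 'M[R[i]]_n) : Prop :=
  forall x y : 'cV[R[i]]_n,
    D *m bapp mu x y = bapp mu (D *m x) y + bapp mu x (D *m y).

(* mu <> 0, i.e. [mu] is a point of P V_n *)
Definition bilin_nonzero (R : realType) (n : nat) (mu : bilin R n) : Prop :=
  exists i j, mu i j != 0.

(* Main.v *)
Require Import Defs.
From mathcomp Require Import all_boot all_order all_algebra.
From mathcomp Require Import reals.
From mathcomp.real_closed Require Import complex.
From mathcomp Require Import spectral sesquilinear.
From mathcomp Require Import ring lra.
Set Implicit Arguments. Unset Strict Implicit. Unset Printing Implicit Defensive.
Import Order.TTheory GRing.Theory Num.Theory.
Local Open Scope ring_scope.

Lemma rat_orth_disj m n (A : 'M[rat]_(m, n)) (x : 'rV[rat]_n) :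
  (x <= A)%MS -> x *m A^T = 0 -> x = 0.
Proof.
move=> /submxP [y ->] H.
have H0 : (y *m A) *m (y *m A)^T = 0 by rewrite trmx_mul mulmxA H mul0mx.
have H1 : \sum_l ((y *m A) 0 l) ^+ 2 = 0.
  move/matrixP: H0 => /(_ 0 0); rewrite !mxE => E; rewrite -[RHS]E.
  by apply: eq_bigr => l _; rewrite !mxE expr2.
apply/rowP => l; rewrite [RHS]mxE.
have := psumr_eq0P (P := predT) (fun i _ => sqr_ge0 ((y *m A) 0 i)) H1 (i:=l) isT.
by move/eqP; rewrite sqrf_eq0 => /eqP.
Qed.

Lemma rat_decomp_mx m n (A : 'M[rat]_(m, n)) :
  exists y : 'rV[rat]_m, exists u : 'rV[rat]_n,
    u *m A^T = 0 /\ const_mx 1 = y *m A + u.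
Proof.
set K := kermx A^T.
have cap0 : (A :&: K)%MS = 0.
  apply/row_matrixP => i; rewrite row0.
  apply: (@rat_orth_disj m n A).
    exact: submx_trans (row_sub i _) (capmxSl _ _).
  apply/sub_kermxP; exact: submx_trans (row_sub i _) (capmxSr _ _).
have full : row_full (A + K)%MS.
  rewrite /row_full mxrank_disjoint_sum // mxrank_ker mxrank_tr.
  by rewrite subnKC // rank_leq_col.
have : ((const_mx 1 : 'rV[rat]_n) <= A + K)%MS.
  by apply: submx_trans (submx1 _) _; rewrite sub1mx.
move=> /sub_addsmxP [[y w] /= E].
exists y, (w *m K); split; first by rewrite -mulmxA mulmx_ker mulmx0.
exact: E.
Qed.

Lemma rat_decomp (S : finType) n (al : S -> 'I_n -> int) :
  exists u : 'I_n -> rat, exists y : S -> rat,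
    (forall s, \sum_l (al s l)%:~R * u l = 0) /\
    (forall l, 1 - u l = \sum_s y s * (al s l)%:~R).
Proof.
pose A : 'M[rat]_(#|{: S}|, n) := \matrix_(i, l) (al (enum_val i) l)%:~R.
have [y [u [H1 H2]]] := rat_decomp_mx A.
have ridx : forall F : 'I_#|{: S}| -> rat,
    \sum_i F i = \sum_s F (enum_rank s).
  move=> F; rewrite (reindex enum_rank) //.
  by exists enum_val => x _; [rewrite enum_rankK | rewrite enum_valK].
exists (fun l => u 0 l), (fun s => y 0 (enum_rank s)); split.
- move=> s; move/matrixP: H1 => /(_ 0 (enum_rank s)); rewrite !mxE => E; rewrite -[RHS]E.
  by apply: eq_bigr => l _; rewrite !mxE enum_rankK mulrC.
- move=> l; have E : (1 : rat) = \sum_j y 0 j * A j l + u 0 l.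
    by move/matrixP: H2 => /(_ 0 l); rewrite !mxE.
  rewrite {1}E addrK ridx; apply: eq_bigr => s _; by rewrite !mxE enum_rankK.
Qed.

Lemma combine (C : numClosedFieldType) (S : finType) n (al : S -> 'I_n -> int)
  (dv : 'I_n -> C) (c : C) (z : S -> C) :
  (forall s, \sum_l (al s l)%:~R * dv l = 0) ->
  (forall l, c + dv l = \sum_s z s * (al s l)%:~R) ->
  exists u : 'I_n -> rat, forall l, dv l = - c * ratr (u l).
Proof.
move=> Hd Hz.
have [u [y [H1 H2]]] := rat_decomp al.
exists u.
pose x l := c * ratr (u l) + dv l.
have Hx1 : forall s, \sum_l (al s l)%:~R * x l = 0.
  move=> s; rewrite /x.
  under eq_bigr => l _ do rewrite mulrDr.
  rewrite big_split /= Hd addr0.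
  under eq_bigr => l _ do rewrite mulrCA.
  rewrite -mulr_sumr.
  have -> : \sum_l (al s l)%:~R * ratr (u l) = ratr (\sum_l (al s l)%:~R * u l) :> C.
    by rewrite rmorph_sum; apply: eq_bigr => l _; rewrite rmorphM /= rmorph_int.
  by rewrite H1 rmorph0 mulr0.
have Hx2 : forall l, x l = \sum_s (z s - c * ratr (y s)) * (al s l)%:~R.
  move=> l; rewrite /x.
  have E : ratr (u l) = 1 - \sum_s ratr (y s) * (al s l)%:~R :> C.
    have := congr1 (@ratr C) (H2 l); rewrite rmorphB rmorph1 rmorph_sum /=.
    under eq_bigr => s _ do rewrite rmorphM /= rmorph_int.
    by move=> <-; rewrite opprB addrC subrK.
  rewrite E mulrBr mulr1 addrAC Hz mulr_sumr -sumrB.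
  by apply: eq_bigr => s _; rewrite mulrBl mulrA.
have Hx3 : \sum_l x l * (x l)^* = 0.
  under eq_bigr => l _ do rewrite {1}Hx2 mulr_suml.
  rewrite exchange_big /= big1 // => s _.
  under eq_bigr => l _ do rewrite -mulrA.
  rewrite -mulr_sumr.
  have -> : \sum_l (al s l)%:~R * (x l)^* = (\sum_l (al s l)%:~R * x l)^*.
    rewrite rmorph_sum; apply: eq_bigr => l _; by rewrite rmorphM /= rmorph_int.
  by rewrite Hx1 conjC0 mulr0.
move=> l.
have Hxl : x l = 0.
  have H0 := psumr_eq0P (P := predT) (F := fun l => `|x l| ^+ 2)
     (fun i _ => exprn_ge0 2 (normr_ge0 (x i))).
  have : `|x l| ^+ 2 = 0.
    apply: H0 => //; rewrite -[RHS]Hx3; apply: eq_bigr => i _; by rewrite normCK.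
  by move/eqP; rewrite sqrf_eq0 normr_eq0 => /eqP.
by move: Hxl; rewrite /x mulNr => /eqP; rewrite addrC addr_eq0 => /eqP.
Qed.

Lemma eig_conj (F : fieldType) n (P Q : 'M[F]_n) (d : 'rV_n) lam :
  P *m Q = 1%:M -> Q *m P = 1%:M ->
  (eigenvalue (Q *m diag_mx d *m P) lam <-> exists l, lam = d 0 l).
Proof.
move=> PQ QP; split.
- move=> /eigenvalueP [v Hv v0].
  set w := v *m Q.
  have Hw : w *m diag_mx d = lam *: w.
    have := congr1 (mulmx^~ Q) Hv.
    by rewrite -!mulmxA PQ mulmx1 -scalemxAl !mulmxA.
  have w0 : w != 0.
    apply: contra v0 => /eqP w0; apply/eqP.
    by rewrite -[v]mulmx1 -QP mulmxA -/w w0 mul0mx.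
  case: (pickP (fun l => w 0 l != 0)) => [l Hl | H0]; last first.
    exfalso; move/negP: w0; apply; apply/eqP/rowP => l.
    by move/negbFE: (H0 l) => /eqP ->; rewrite mxE.
  exists l; move/matrixP: Hw => /(_ 0 l); rewrite mul_mx_diag mxE [in RHS]mxE.
  by move=> E; apply: (mulIf Hl); rewrite -E mulrC.
- move=> [l ->]; apply/eigenvalueP.
  exists (delta_mx 0 l *m P).
    rewrite !mulmxA -(mulmxA _ P Q) PQ mulmx1.
    have -> : delta_mx 0 l *m diag_mx d = d 0 l *: (delta_mx 0 l : 'rV[F]_n).
      apply/rowP => j; rewrite mul_mx_diag !mxE.
      by rewrite eqxx /=; case: eqP => [->|_]; rewrite ?mul1r ?mulr1 ?mul0r ?mulr0.
    by rewrite scalemxAl.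
  apply: contraTneq isT => H.
  have := congr1 (mulmx^~ Q) H; rewrite -mulmxA PQ mulmx1 mul0mx => /matrixP /(_ 0 l).
  by rewrite !mxE !eqxx /= => /eqP; rewrite oner_eq0.
Qed.

Lemma scale_conj (F : fieldType) n (P Q : 'M[F]_n) (d : 'rV_n) (a : F) :
  a *: (Q *m diag_mx d *m P) = Q *m diag_mx (a *: d) *m P.
Proof. by rewrite [diag_mx (a *: d)]linearZ /= -scalemxAr -scalemxAl. Qed.

Lemma finish (R : realType) n (D P Q : 'M[R[i]]_n) (d : 'rV[R[i]]_n) (c : R)
  (u : 'I_n -> rat) :
  P *m Q = 1%:M -> Q *m P = 1%:M -> D = Q *m diag_mx d *m P ->
  (forall l, d 0 l = - (c%:C)%C * ratr (u l)) ->
  exists s : R, 0 < s /\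
    (forall lam : R[i], eigenvalue ((s%:C)%C *: D) lam ->
       exists k : int, lam = k%:~R) /\
    (D != 0 ->
       forall d' : nat,
         (forall lam : R[i], eigenvalue ((s%:C)%C *: D) lam ->
            exists k : int, lam = (d'%:R * k%:~R)) ->
         d' = 1%N).
Proof.
move=> PQ QP -> Hd.
have [Hz | Hnz] := boolP ((c == 0) || [forall l, u l == 0]).
  have d0 : d = 0.
    apply/rowP => l; rewrite Hd mxE.
    case/orP: Hz => [/eqP -> | /forallP /(_ l) /eqP ->]; first by rewrite rmorph0 oppr0 mul0r.
    by rewrite rmorph0 mulr0.
  exists 1; split; first exact: ltr01.
  split.
    move=> lam; rewrite scale_conj => /(eig_conj _ _ PQ QP) [l ->].
    by exists 0; rewrite d0 scaler0 mxE.
  by rewrite d0 linear0 mulmx0 mul0mx eqxx.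
move: Hnz; rewrite negb_or => /andP [c0 /forallPn [l0 /= ul0]].
pose mq : int := \prod_j denq (u j).
pose k l : int := numq (u l) * \prod_(j | j != l) denq (u j).
have Hk : forall l, u l * mq%:~R = (k l)%:~R.
  move=> l; rewrite /mq /k (bigD1 l) //= !intrM mulrA -numqE.
  by rewrite rmorph_prod.
have mq0 : 0 < mq by apply: prodr_gt0 => j _; exact: denq_gt0.
have kl0 : k l0 != 0.
  rewrite /k mulf_eq0 negb_or numq_eq0 ul0 /=.
  by rewrite prodf_seq_neq0; apply/allP => j _; apply/implyP => _; exact: denq_neq0.
pose K l := `|k l|%N.
pose g := \big[gcdn/0]_l K l.
have gK : forall l, (g %| K l)%N by move=> l; apply: (biggcdn_inf l).
have g0 : (0 < g)%N.
  rewrite lt0n; apply: contra kl0 => /eqP g0.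
  by move: (gK l0); rewrite g0 dvd0n /K absz_eq0; apply.
pose k' l := (k l %/ g%:Z)%Z.
have Hk' : forall l, k' l * g%:Z = k l.
  by move=> l; apply: divzK; rewrite dvdzE; exact: gK.
pose s : R := mq%:~R / (g%:R * `|c|).
pose sg : int := if 0 < c then -1 else 1.
have mqR : (mq%:~R : R) != 0 by rewrite intr_eq0 gt_eqF.
have gR : (g%:R : R) != 0 by rewrite pnatr_eq0 -lt0n.
have Hentry : forall l, (s%:C)%C * d 0 l = ((sg * k' l)%:~R : R[i]).
  move=> l; rewrite Hd.
  have -> : ratr (u l) = ((ratr (u l) : R)%:C)%C :> R[i].
    by rewrite (fmorph_rat (real_complex R)).
  rewrite -(rmorph_int (real_complex R)) -!rmorphN -!rmorphM; congr (_%:C)%C.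
  have Hr : (ratr (u l) : R) = (k' l)%:~R * g%:R / mq%:~R.
    have := congr1 (@ratr R) (Hk l); rewrite rmorphM /= !ratr_int -Hk' intrM.
    by move=> <-; rewrite mulfK.
  rewrite Hr /s /sg intrM; case: (ltrgtP 0 c) => hc.
  - by rewrite gtr0_norm //; field; apply/and3P; split.
  - by rewrite ltr0_norm //; field; apply/and3P; split.
  - by move: c0; rewrite -hc eqxx.
have eigS : forall lam, eigenvalue ((s%:C)%C *: (Q *m diag_mx d *m P)) lam <->
    exists l, lam = ((sg * k' l)%:~R : R[i]).
  move=> lam; rewrite scale_conj eig_conj //; split => [[l ->]|[l ->]];
    exists l; by rewrite mxE Hentry.
exists s; split.
  by rewrite divr_gt0 ?ltr0z // mulr_gt0 ?ltr0n // normr_gt0.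
split.
  by move=> lam /eigS [l ->]; exists (sg * k' l).
move=> _ d' Hd'.
have Hdiv : forall l, exists t : int, sg * k' l = d'%:Z * t.
  move=> l; have [t Ht] := Hd' _ (proj2 (eigS _) (ex_intro _ l erefl)).
  exists t; apply: (@intr_inj R[i]); by rewrite Ht intrM.
have sg1 : `|sg|%N = 1%N by rewrite /sg; case: (0 < c).
have HdK : forall l, (d' * g %| K l)%N.
  move=> l; have [t Ht] := Hdiv l.
  have : absz (sg * k' l) = (d' * absz t)%N by rewrite Ht abszM absz_nat.
  rewrite abszM sg1 mul1n /K -Hk' abszM absz_nat => ->.
  by rewrite mulnAC dvdn_mulr.
have Hdg : (d' * g %| g)%N by apply/dvdn_biggcdP => l _; exact: HdK.
have d'0 : d' != 0%N.
  apply/negP => /eqP d'0; have [t Ht] := Hdiv l0.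
  move: Ht; rewrite d'0 mul0r => /eqP; rewrite mulf_eq0 => /orP [/eqP sg0|/eqP k0].
    by move: sg1; rewrite sg0.
  by move: kl0; rewrite -Hk' k0 mul0r eqxx.
have := dvdn_leq g0 Hdg.
rewrite -{2}[g]mul1n leq_pmul2r //.
by case: d' d'0 {Hd' Hdiv HdK Hdg} => [|[|]].
Qed.

Local Open Scope sesquilinear_scope.

Section Basic.
Variable C : numClosedFieldType.

Lemma adjM m n p (A : 'M[C]_(m, n)) (B : 'M[C]_(n, p)) :
  (A *m B)^t* = B^t* *m A^t*.
Proof. by rewrite trmx_mul map_mxM. Qed.

Lemma adjB m n (A B : 'M[C]_(m, n)) : (A - B)^t* = A^t* - B^t*.
Proof. by rewrite !raddfB. Qed.

Definition fn m n (X : 'M[C]_(m, n)) := \sum_i \sum_j X i j * (X i j)^*.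

Lemma fnE m n (X : 'M[C]_(m, n)) : fn X = \tr (X *m X^t*).
Proof.
rewrite /fn /mxtrace; apply: eq_bigr => i _; rewrite mxE.
by apply: eq_bigr => j _; rewrite !mxE.
Qed.

Lemma fn_inv m n (U : 'M[C]_m) (X : 'M[C]_(m, n)) (V : 'M[C]_n) :
  U^t* *m U = 1%:M -> V *m V^t* = 1%:M -> fn (U *m X *m V) = fn X.
Proof.
move=> HU HV; rewrite !fnE !adjM !mulmxA -(mulmxA _ V) HV mulmx1.
by rewrite mxtrace_mulC !mulmxA HU mul1mx.
Qed.
End Basic.

Section Bil.
Variables (R : realType) (n : nat) (mu : bilin R n).
Local Notation C := R[i].

Lemma evecE (i k : 'I_n) : (evec i : 'cV[C]_n) k 0 = (k == i)%:R.
Proof. by rewrite /evec mxE andbT. Qed.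

Lemma sum_delta (f : 'I_n -> 'cV[C]_n) (i : 'I_n) :
  \sum_(a < n) ((a == i)%:R : C) *: f a = f i.
Proof.
rewrite (bigD1 i) //= eqxx scale1r big1 ?addr0 // => a /negPf ->.
by rewrite scale0r.
Qed.

Lemma bapp_evec i j : bapp mu (evec i) (evec j) = mu i j.
Proof.
rewrite /bapp (eq_bigr (fun a => ((a == i)%:R : C) *: \sum_(b < n) ((b == j)%:R : C) *: mu a b)).
  by rewrite sum_delta sum_delta.
move=> a _; rewrite scaler_sumr; apply: eq_bigr => b _.
by rewrite !evecE scalerA.
Qed.

Lemma bappZl (a : C) x y : bapp mu (a *: x) y = a *: bapp mu x y.
Proof.
rewrite /bapp scaler_sumr; apply: eq_bigr => i _; rewrite scaler_sumr.
by apply: eq_bigr => j _; rewrite scalerA mxE mulrA.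
Qed.

Lemma bappZr (a : C) x y : bapp mu x (a *: y) = a *: bapp mu x y.
Proof.
rewrite /bapp scaler_sumr; apply: eq_bigr => i _; rewrite scaler_sumr.
by apply: eq_bigr => j _; rewrite scalerA mxE mulrCA mulrA.
Qed.

Lemma LmxE i k j : Lmx mu (evec i) k j = mu i j k 0.
Proof. by rewrite /Lmx mxE bapp_evec. Qed.

Lemma RmxE i k j : Rmx mu (evec i) k j = mu j i k 0.
Proof. by rewrite /Rmx mxE bapp_evec. Qed.

Lemma Mmu_herm : (Mmu mu)^t* = Mmu mu.
Proof.
have adjE : forall A : 'M[C]_n, adjmx A = A^t* by [].
rewrite /Mmu (_ : @adjmx R n = fun A => A^t*) //= !raddfB /= !raddfMn /= !raddf_sum /=.
by congr (_ + _ + _); congr (_ *+ 2); apply: eq_bigr => i _;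
  rewrite ?raddfN /= adjM trmxCK.
Qed.
End Bil.

Section Main.
Variables (R : realType) (n : nat) (mu : bilin R n) (cmu : R) (D : 'M[R[i]]_n).
Local Notation C := R[i].
Hypothesis hder : is_derivation mu D.
Hypothesis hM : Mmu mu = (cmu%:C)%C%:M + D.

Lemma conj_realC (x : R) : ((x%:C)%C)^* = (x%:C)%C :> C.
Proof. by apply/eqP; rewrite eq_complex /= oppr0 !eqxx. Qed.

Lemma D_herm : D^t* = D.
Proof.
have -> : D = Mmu mu - (cmu%:C)%C%:M by rewrite hM addrC addKr.
rewrite adjB Mmu_herm; congr (_ - _).
apply/matrixP => i j; rewrite !mxE eq_sym; case: eqP => _; rewrite ?mulr1n ?mulr0n ?conj_realC ?conjC0 //.
Qed.

Lemma spec_exists : exists (P : 'M[C]_n) (d : 'rV[C]_n),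
  [/\ P *m P^t* = 1%:M, P^t* *m P = 1%:M & D = P^t* *m diag_mx d *m P].
Proof.
exists (spectralmx D), (spectral_diag D); split.
- exact/unitarymxP/spectral_unitarymx.
- by rewrite -invmx_unitary ?spectral_unitarymx // mulVmx ?spectral_unit.
- have /orthomx_spectralP : D \is normalmx by apply/normalmxP; rewrite D_herm.
  by rewrite invmx_unitary ?spectral_unitarymx.
Qed.
End Main.

Section Main2.
Variables (R : realType) (n : nat) (mu : bilin R n) (cmu : R) (D : 'M[R[i]]_n).
Local Notation C := R[i].
Hypothesis hder : is_derivation mu D.
Hypothesis hM : Mmu mu = (cmu%:C)%C%:M + D.
Variables (P : 'M[C]_n) (d : 'rV[C]_n).
Local Notation Q := (P^t*).
Hypothesis PQ : P *m Q = 1%:M.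
Hypothesis QP : Q *m P = 1%:M.
Hypothesis HD : D = Q *m diag_mx d *m P.

Definition nu a b e := (P *m bapp mu (col a Q) (col b Q)) e 0.

Lemma DQ : D *m Q = Q *m diag_mx d.
Proof. by rewrite {1}HD -!mulmxA PQ mulmx1. Qed.

Lemma PD : P *m D = diag_mx d *m P.
Proof. by rewrite {1}HD !mulmxA PQ mul1mx. Qed.

Lemma eigv a : D *m col a Q = d 0 a *: col a Q.
Proof.
apply/colP => k; have /matrixP /(_ k a) := DQ.
rewrite mul_mx_diag !mxE => E.
under eq_bigr => j _ do rewrite !mxE.
by rewrite mulrC -E; apply: eq_bigr => j _; rewrite !mxE.
Qed.

Lemma nu_der a b e : nu a b e * (d 0 e - d 0 a - d 0 b) = 0.
Proof.
have H := hder (col a Q) (col b Q).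
rewrite !eigv bappZl bappZr -scalerDl in H.
have := congr1 (mulmx P) H; rewrite mulmxA PD -mulmxA -scalemxAr.
move/matrixP => /(_ e 0); rewrite mul_diag_mx !mxE.
set S := \sum_j _ => E; rewrite /nu mxE -/S.
have -> : S * (d 0 e - d 0 a - d 0 b) =
  d 0 e * S - (d 0 a + d 0 b) * S by ring.
by rewrite E subrr.
Qed.

Lemma diag1 l : (P *m Mmu mu *m Q) l l = (cmu%:C)%C + d 0 l.
Proof.
rewrite hM mulmxDr mulmxDl mul_mx_scalar -scalemxAl PQ {1}HD.
rewrite !mulmxA PQ mul1mx -mulmxA PQ mulmx1 !mxE eqxx mulr1n.
by rewrite mulr1.
Qed.

Definition sq (z : C) := z * z^*.

Lemma lin3 (A B E : 'M[C]_n) l :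
  (P *m (A *+ 2 - B *+ 2 - E *+ 2) *m Q) l l =
  2 * (P *m A *m Q) l l - 2 * (P *m B *m Q) l l - 2 * (P *m E *m Q) l l.
Proof.
have fD : forall X Y : 'M[C]_n,
    (P *m (X + Y) *m Q) l l = (P *m X *m Q) l l + (P *m Y *m Q) l l.
  by move=> X Y; rewrite mulmxDr mulmxDl mxE.
have fN : forall X : 'M[C]_n, (P *m (- X) *m Q) l l = - (P *m X *m Q) l l.
  by move=> X; rewrite mulmxN mulNmx mxE.
have f2 : forall X : 'M[C]_n, (P *m (X *+ 2) *m Q) l l = 2 * (P *m X *m Q) l l.
  by move=> X; rewrite mulr2n fD -mulr2n mulr_natl.
rewrite (fD (A *+ 2 - B *+ 2) (- (E *+ 2))) (fN (E *+ 2)).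
rewrite (fD (A *+ 2) (- (B *+ 2))) (fN (B *+ 2)).
by rewrite (f2 A) (f2 B) (f2 E).
Qed.

Lemma linsum (X : 'I_n -> 'M[C]_n) l :
  (P *m (\sum_i X i) *m Q) l l = \sum_i (P *m X i *m Q) l l.
Proof. by rewrite mulmx_sumr mulmx_suml summxE. Qed.

Lemma ent1 (A : 'M[C]_n) l :
  (P *m (A *m A^t*) *m Q) l l = \sum_j sq ((P *m A) l j).
Proof.
rewrite !mulmxA -(mulmxA (P *m A) (A^t*)) -adjM mxE; apply: eq_bigr => j _.
by rewrite !mxE.
Qed.

Lemma QadjP : Q^t* = P.
Proof. by rewrite trmxCK. Qed.

Lemma ent2 (A : 'M[C]_n) l :
  (P *m (A^t* *m A) *m Q) l l = \sum_k sq ((A *m Q) k l).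
Proof.
rewrite -{1}QadjP mulmxA -adjM -mulmxA mxE; apply: eq_bigr => k _.
by rewrite !mxE mulrC.
Qed.

Lemma diag2 l : (P *m Mmu mu *m Q) l l =
  2 * (\sum_i \sum_j sq ((P *m Lmx mu (evec i)) l j))
  - 2 * (\sum_i \sum_k sq ((Lmx mu (evec i) *m Q) k l))
  - 2 * (\sum_i \sum_k sq ((Rmx mu (evec i) *m Q) k l)).
Proof.
rewrite /Mmu lin3 !linsum.
congr (2 * _ - 2 * _ - 2 * _); apply: eq_bigr => i _.
- exact: ent1.
- exact: ent2.
- exact: ent2.
Qed.

Lemma bappE x y k :
  bapp mu x y k 0 = \sum_i \sum_j x i 0 * y j 0 * mu i j k 0.
Proof.
rewrite /bapp summxE; apply: eq_bigr => i _; rewrite summxE.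
by apply: eq_bigr => j _; rewrite mxE.
Qed.

Lemma PbappE (x y : 'cV[C]_n) (l : 'I_n) :
  (P *m bapp mu x y) l 0 = \sum_i \sum_j x i 0 * y j 0 * (P *m mu i j) l 0.
Proof.
rewrite /bapp mulmx_sumr summxE; apply: eq_bigr => i _.
rewrite mulmx_sumr summxE; apply: eq_bigr => j _.
by rewrite -scalemxAr mxE.
Qed.

Lemma QTadj : (Q^T)^t* = P^T.
Proof. by apply/matrixP => i j; rewrite !mxE conjCK. Qed.

Lemma T1E l :
  \sum_i \sum_j sq ((P *m Lmx mu (evec i)) l j) = \sum_a \sum_b sq (nu a b l).
Proof.
pose B := \matrix_(i, j) (P *m mu i j) l 0.
have HB : forall i j, (P *m Lmx mu (evec i)) l j = B i j.
  move=> i j; rewrite !mxE; apply: eq_bigr => k _; by rewrite LmxE.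
have Hnu : forall a b, nu a b l = (Q^T *m B *m Q) a b.
  move=> a b; rewrite /nu PbappE exchange_big /= mxE; apply: eq_bigr => j _.
  rewrite [(Q^T *m B) a j]mxE mulr_suml; apply: eq_bigr => i _.
  rewrite !mxE; ring.
have -> : \sum_a \sum_b sq (nu a b l) = fn (Q^T *m B *m Q).
  by apply: eq_bigr => a _; apply: eq_bigr => b _; rewrite Hnu.
rewrite fn_inv; last by rewrite QadjP QP.
  by apply: eq_bigr => i _; apply: eq_bigr => j _; rewrite HB.
by rewrite QTadj -trmx_mul QP trmx1.
Qed.

Lemma frob_gen (N : 'M[C]_n) (v : 'I_n -> 'cV[C]_n) :
  (forall a, v a = N *m col a Q) ->
  \sum_a \sum_e sq ((P *m v a) e 0) = fn N.
Proof.
move=> Hv.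
have E : forall a e, (P *m v a) e 0 = (P *m N *m Q) e a.
  move=> a e; rewrite Hv mulmxA !mxE; apply: eq_bigr => j _; by rewrite !mxE.
rewrite -(fn_inv (U := P) (V := Q) N); last by rewrite QadjP QP.
  by rewrite exchange_big /=; apply: eq_bigr => e _; apply: eq_bigr => a _; rewrite E.
exact: QP.
Qed.

Lemma fn_exch (N : 'M[C]_n) : fn N = \sum_i \sum_k sq (N k i).
Proof. by rewrite /fn exchange_big. Qed.

Lemma T2E l :
  \sum_i \sum_k sq ((Lmx mu (evec i) *m Q) k l) = \sum_a \sum_e sq (nu a l e).
Proof.
pose N := \matrix_(k, i) (Lmx mu (evec i) *m Q) k l.
rewrite (frob_gen (N := N) (v := fun a => bapp mu (col a Q) (col l Q))).
  by rewrite fn_exch; apply: eq_bigr => i _; apply: eq_bigr => k _; rewrite [in RHS]mxE.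
move=> a; apply/colP => k; rewrite bappE !mxE; apply: eq_bigr => i _.
rewrite !mxE mulr_suml; apply: eq_bigr => j _; rewrite !mxE bapp_evec; ring.
Qed.

Lemma T3E l :
  \sum_i \sum_k sq ((Rmx mu (evec i) *m Q) k l) = \sum_a \sum_e sq (nu l a e).
Proof.
pose N := \matrix_(k, i) (Rmx mu (evec i) *m Q) k l.
rewrite (frob_gen (N := N) (v := fun a => bapp mu (col l Q) (col a Q))).
  by rewrite fn_exch; apply: eq_bigr => i _; apply: eq_bigr => k _; rewrite [in RHS]mxE.
move=> a; apply/colP => k; rewrite bappE exchange_big /= !mxE; apply: eq_bigr => j _.
rewrite !mxE mulr_suml; apply: eq_bigr => i _; rewrite !mxE bapp_evec; ring.
Qed.

Lemma sumdl (F : 'I_n -> C) l : \sum_x F x * (x == l)%:R = F l.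
Proof.
rewrite (bigD1 l) //= eqxx mulr1 big1 ?addr0 // => x /negPf ->.
by rewrite mulr0.
Qed.

Lemma sumdr (F : 'I_n -> C) l : \sum_x (x == l)%:R * F x = F l.
Proof. by rewrite -[RHS](sumdl F l); apply: eq_bigr => x _; rewrite mulrC. Qed.

Lemma sumS (F : 'I_n -> 'I_n -> 'I_n -> C) :
  \sum_(s : ('I_n * 'I_n) * 'I_n) F s.1.1 s.1.2 s.2 =
  \sum_a \sum_b \sum_e F a b e.
Proof.
rewrite -(pair_big xpredT xpredT (fun ab e => F ab.1 ab.2 e)) /=.
by rewrite -(pair_big xpredT xpredT (fun a b => \sum_e F a b e)).
Qed.

Lemma key_eq l : (cmu%:C)%C + d 0 l =
  2 * (\sum_a \sum_b sq (nu a b l))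
  - 2 * (\sum_a \sum_e sq (nu a l e))
  - 2 * (\sum_a \sum_e sq (nu l a e)).
Proof. by rewrite -diag1 diag2 T1E T2E T3E. Qed.
End Main2.

Lemma key (R : realType) (n : nat) (mu : bilin R n) (cmu : R) (D : 'M[R[i]]_n)
  (hder : is_derivation mu D) (hM : Mmu mu = (cmu%:C)%C%:M + D)
  (P : 'M[R[i]]_n) (d : 'rV[R[i]]_n)
  (PQ : P *m P^t* = 1%:M) (QP : P^t* *m P = 1%:M)
  (HD : D = P^t* *m diag_mx d *m P) :
  exists u : 'I_n -> rat, forall l, d 0 l = - (cmu%:C)%C * ratr (u l).
Proof.
pose al (s : ('I_n * 'I_n) * 'I_n) (l : 'I_n) : int :=
  (((s.2 == l)%:R - (s.1.1 == l)%:R - (s.1.2 == l)%:R) *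
   (nu mu P s.1.1 s.1.2 s.2 != 0)%:R)%R.
pose z (s : ('I_n * 'I_n) * 'I_n) := 2 * sq (nu mu P s.1.1 s.1.2 s.2).
apply: (@combine _ _ n al (fun l => d 0 l) ((cmu%:C)%C) z).
- move=> [[a b] e] /=; rewrite /al /=.
  under eq_bigr => l _ do rewrite intrM mulrAC.
  rewrite -mulr_suml.
  case: eqP => [_|nz] /=; first by rewrite mulr0.
  rewrite mulr1.
  under eq_bigr => l _ do rewrite !intrB !rmorph_nat !mulrBl ![(_ == l)]eq_sym.
  rewrite !sumrB !sumdr.
  have := nu_der hder PQ HD a b e.
  by move/eqP; rewrite mulf_eq0 => /orP [/eqP //|/eqP].
- move=> l; rewrite (key_eq hM PQ QP HD l).
  pose F a b e := 2 * sq (nu mu P a b e).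
  have step : forall s, z s * (al s l)%:~R =
      F s.1.1 s.1.2 s.2 * ((s.2 == l)%:R - (s.1.1 == l)%:R - (s.1.2 == l)%:R).
    have gen : forall (v x : R[i]) (bb : bool), (bb = false -> v = 0) ->
        2 * sq v * (x * ((bb%:R : int))%:~R) = 2 * sq v * x.
      move=> v x [] H; first by rewrite mulr1.
      by rewrite (H erefl) /sq mul0r !mulr0 mul0r.
    move=> [[a b] e]; rewrite /z /al /F /= intrM.
    rewrite gen; first by rewrite !intrB !rmorph_nat; reflexivity.
    by move/negbFE/eqP.
  rewrite (eq_bigr _ (fun s _ => step s)).
  rewrite (sumS (fun a b e => F a b e * ((e == l)%:R - (a == l)%:R - (b == l)%:R))).
  have EX : \sum_a \sum_b \sum_e F a b e * (e == l)%:R =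
      2 * (\sum_a \sum_b sq (nu mu P a b l)).
    rewrite mulr_sumr; apply: eq_bigr => a _; rewrite mulr_sumr.
    by apply: eq_bigr => b _; rewrite sumdl.
  have EY : \sum_a \sum_b \sum_e F a b e * (a == l)%:R =
      2 * (\sum_a \sum_e sq (nu mu P l a e)).
    rewrite (eq_bigr (fun a => (\sum_b \sum_e F a b e) * (a == l)%:R)).
      rewrite sumdl mulr_sumr; apply: eq_bigr => b _; rewrite mulr_sumr.
      done.
    move=> a _; rewrite mulr_suml; apply: eq_bigr => b _; by rewrite mulr_suml.
  have EZ : \sum_a \sum_b \sum_e F a b e * (b == l)%:R =
      2 * (\sum_a \sum_e sq (nu mu P a l e)).
    rewrite mulr_sumr; apply: eq_bigr => a _.
    rewrite (eq_bigr (fun b => (\sum_e F a b e) * (b == l)%:R)).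
      by rewrite sumdl mulr_sumr.
    by move=> b _; rewrite mulr_suml.
  rewrite -EX -EY -EZ -!sumrB; apply: eq_bigr => a _.
  rewrite -!sumrB; apply: eq_bigr => b _.
  rewrite -!sumrB; apply: eq_bigr => e _.
  by rewrite !mulrBr; ring.
Qed.

Close Scope sesquilinear_scope.

Theorem theorem4p2 (R : realType) (n : nat) (mu : bilin R n)
  (cmu : R) (D : 'M[R[i]]_n) :
  bilin_nonzero mu ->
  is_derivation mu D ->
  Mmu mu = (cmu%:C)%C%:M + D ->
  exists c : R, 0 < c /\
    (forall lam : R[i], eigenvalue ((c%:C)%C *: D) lam ->
       exists k : int, lam = k%:~R) /\
    (D != 0 ->
       forall d : nat,
         (forall lam : R[i], eigenvalue ((c%:C)%C *: D) lam ->
            exists k : int, lam = (d%:R * k%:~R)) ->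
         d = 1%N).
Proof.
move=> _ hder hM.
have [P [d [PQ QP HD]]] := spec_exists hM.
have [u Hu] := key hder hM PQ QP HD.
exact: (finish PQ QP HD Hu).
Qed.
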